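(* Let $n\ge0$, $a_{n,0},\dots,a_{n,n}\in\mathbb C$, and let $P_n(z)=\sum_{r=0}^n b_{n,r}z^r$ be the associated polynomial. Then all coefficients $b_{n,r}$ are real if and only if $a_{n,k}=\overline{a_{n,n-k}}$ for all $0\le k\le n$ (bar denoting complex conjugation).
   Context: $\imath=\sqrt{-1}$. $\mathcal{A}$ denotes the quotient of the free associative $\mathbb{C}$-algebra on two noncommuting generators $p,q$ by the two-sided ideal generated by $qp-pq-\imath$, and $z=\tfrac12(qp+pq)\in\mathcal A$. For $n\ge0$ and complex numbers $a_{n,0},\dots,a_{n,n}$, there is a unique polynomial $P_n\in\mathbb{C}[X]$ of degree at most $n$ with $\sum_{k=0}^n a_{n,k}q^kp^nq^{n-k}=P_n(z)$ in $\mathcal A$; it is called the polynomial associated to $\{a_{n,k}\}$. *)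

(* Defs.v *)
From HB Require Import structures.
From mathcomp Require Import all_boot all_order all_algebra.
Set Implicit Arguments. Unset Strict Implicit. Unset Printing Implicit Defensive.
Import Order.TTheory GRing.Theory Num.Theory.
Local Open Scope ring_scope.

(* The Weyl algebra A = C<p,q>/(qp - pq - i), realised through its
   faithful Schroedinger representation on C[X]:
     q = multiplication by X,   p = - i d/dX,
   so that (qp - pq) f = i f.  Elements of A are represented as operators
   {poly C} -> {poly C}; equality in A is equality of operators. *)

Section Weyl.
Variable C : numClosedFieldType.

Definition wq (f : {poly C}) : {poly C} := 'X * f.
Definition wp (f : {poly C}) : {poly C} := (- 'i) *: f^`().

Definition wz (f : {poly C}) : {poly C} := 2^-1 *: (wq (wp f) + wp (wq f)).

Definition wmon (n k : nat) (f : {poly C}) : {poly C} :=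
  iter k wq (iter n wp (iter (n - k) wq f)).

Definition wsum (n : nat) (a : nat -> C) (f : {poly C}) : {poly C} :=
  \sum_(k < n.+1) a k *: wmon n k f.

Definition wpolyz (P : {poly C}) (f : {poly C}) : {poly C} :=
  \sum_(r < size P) P`_r *: iter r wz f.

Definition associated_poly (n : nat) (a : nat -> C) (P : {poly C}) : Prop :=
  (size P <= n.+1)%N /\ forall f : {poly C}, wsum n a f = wpolyz P f.
End Weyl.

(* Main.v *)
Require Import Defs.
From HB Require Import structures.
From mathcomp Require Import all_boot all_order all_algebra.
From mathcomp Require Import ring zify.
Import Order.TTheory GRing.Theory Num.Theory.
Local Open Scope ring_scope.

Lemma wq_iter (C : numClosedFieldType) r (f : {poly C}) : iter r (@wq C) f = 'X^r * f.
Proof. elim: r => [|r IH] /=; first by rewrite expr0 mul1r. by rewrite IH /wq exprS mulrA. Qed.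

Lemma wp_iter (C : numClosedFieldType) r (f : {poly C}) :
  iter r (@wp C) f = (-'i)^+r *: f^`(r).
Proof.
elim: r => [|r IH] /=; first by rewrite expr0 scale1r.
by rewrite IH /wp derivZ scalerA -exprS.
Qed.

Lemma wq_scale (C : numClosedFieldType) c (f : {poly C}) : wq (c *: f) = c *: wq f.
Proof. by rewrite /wq scalerAr. Qed.
Lemma wp_scale (C : numClosedFieldType) c (f : {poly C}) : wp (c *: f) = c *: wp f.
Proof. by rewrite /wp derivZ !scalerA mulrC. Qed.

Lemma wz_scale (C : numClosedFieldType) c (f : {poly C}) : wz (c *: f) = c *: wz f.
Proof.
by rewrite /wz !(wq_scale, wp_scale) -scalerDr !scalerA mulrC.
Qed.

Lemma wz_Xn (C : numClosedFieldType) m :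
  wz ('X^m : {poly C}) = (-'i * (m%:R + 2^-1)) *: 'X^m.
Proof.
rewrite /wz /wq /wp !derivXn /= -!scaler_nat -!scalerAr -!exprS !derivXn /=.
apply/polyP => j; rewrite !coefE.
case: m => [|m] /=; rewrite ?coefE; case: (j == _); field; done.
Qed.

Definition xL {C : numClosedFieldType} (t : C) := -'i * (t + 2^-1).

Lemma wz_iter (C : numClosedFieldType) r m :
  iter r (@wz C) 'X^m = (xL m%:R)^+r *: 'X^m.
Proof.
elim: r => [|r IH] /=; first by rewrite expr0 scale1r.
by rewrite IH wz_scale wz_Xn scalerA exprS mulrC.
Qed.

Lemma wpolyz_Xn (C : numClosedFieldType) (P : {poly C}) m :
  wpolyz P 'X^m = P.[xL m%:R] *: 'X^m.
Proof.
rewrite /wpolyz horner_coef scaler_suml; apply: eq_bigr => r _.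
by rewrite wz_iter scalerA.
Qed.

Lemma wmon_Xn (C : numClosedFieldType) n k m : (k <= n)%N ->
  wmon n k ('X^m : {poly C}) = ((-'i)^+n * ((m + n - k)^_n)%:R) *: 'X^m.
Proof.
move=> kn; rewrite /wmon !wq_iter wp_iter -exprD derivnXn -scalerMnr [LHS]mulrnAr -scalerAr scalerMnl mulr_natr.
case: (leqP k m) => km.
  rewrite -exprD; have -> : (n - k + m = m + n - k)%N by lia.
  by congr (_ *: 'X^_); lia.
rewrite ffact_small ?mulr0n ?scale0r // ?[in RHS]ffact_small ?mulr0n ?scale0r //; lia.
Qed.

Lemma wsum_Xn (C : numClosedFieldType) n (a : nat -> C) m :
  wsum n a 'X^m = (\sum_(k < n.+1) a k * ((-'i)^+n * ((m + n - k)^_n)%:R)) *: 'X^m.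
Proof.
rewrite /wsum scaler_suml; apply: eq_bigr => k _.
by rewrite wmon_Xn ?scalerA // -ltnS.
Qed.

Lemma assoc_val (C : numClosedFieldType) n (a : nat -> C) P :
  associated_poly n a P -> forall m : nat,
  P.[xL m%:R] = \sum_(k < n.+1) a k * ((-'i)^+n * ((m + n - k)^_n)%:R).
Proof.
move=> [_ h] m; have e := h 'X^m; rewrite wsum_Xn wpolyz_Xn in e.
have := congr1 (fun p : {poly C} => p`_m) e => /=.
by rewrite !coefZ coefXn eqxx !mulr1 => ->.
Qed.

Definition pik {C : numClosedFieldType} (n k : nat) : {poly C} :=
  \prod_(j < n) ('X + (n%:R - k%:R - j%:R)%:P).

Definition Rp {C : numClosedFieldType} (n : nat) (a : nat -> C) : {poly C} :=
  \sum_(k < n.+1) (a k * (-'i)^+n) *: pik n k.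

Lemma horner_pik (C : numClosedFieldType) n k (t : C) :
  (pik n k).[t] = \prod_(j < n) (t + (n%:R - k%:R - j%:R)).
Proof. by rewrite /pik horner_prod; apply: eq_bigr => j _; rewrite hornerD hornerX hornerC. Qed.

Lemma pik_nat (C : numClosedFieldType) n k m : (k <= n)%N ->
  (pik n k).[m%:R] = ((m + n - k)^_n)%:R :> C.
Proof.
move=> kn; rewrite horner_pik.
case: (leqP k m) => km.
  rewrite ffact_prod natr_prod; apply: eq_bigr => j _; rewrite natrB; last by have := ltn_ord j; lia.
  rewrite natrB; last by lia.
  rewrite natrD; ring.
rewrite ffact_small; last by lia.
have hj : (m + n - k < n)%N by lia.
rewrite (bigD1 (Ordinal hj)) //= natrB; last by lia.
rewrite natrD.
have -> : m%:R + (n%:R - k%:R - (m%:R + n%:R - k%:R)) = 0 :> C by ring.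
by rewrite mul0r.
Qed.

Lemma Rp_horner (C : numClosedFieldType) n (a : nat -> C) t :
  (Rp n a).[t] = \sum_(k < n.+1) (a k * (-'i)^+n) * \prod_(j < n) (t + (n%:R - k%:R - j%:R)).
Proof. by rewrite /Rp horner_sum; apply: eq_bigr => k _; rewrite hornerZ horner_pik. Qed.

Lemma Rp_nat (C : numClosedFieldType) n (a : nat -> C) m :
  (Rp n a).[m%:R] = \sum_(k < n.+1) a k * ((-'i)^+n * ((m + n - k)^_n)%:R).
Proof.
rewrite /Rp horner_sum; apply: eq_bigr => k _; rewrite hornerZ pik_nat -?mulrA //.
by rewrite -ltnS.
Qed.

Lemma size_Rp (C : numClosedFieldType) n (a : nat -> C) : (size (Rp n a) <= n.+1)%N.
Proof.
rewrite /Rp; apply: (big_ind (fun p : {poly C} => size p <= n.+1)%N).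
- by rewrite size_poly0.
- by move=> p q hp hq; apply: leq_trans (size_polyD _ _) _; rewrite geq_max hp hq.
move=> k _; apply: leq_trans (size_scale_leq _ _) _.
apply: leq_trans (size_poly_prod_leq _ _) _.
rewrite (eq_bigr (fun _ => 2%N)); last by move=> j _; rewrite size_XaddC.
rewrite sum_nat_const card_ord; lia.
Qed.

Lemma poly_eq0_inj (C : numClosedFieldType) (p : {poly C}) (g : nat -> C) N :
  injective g -> (size p <= N)%N -> (forall i, (i < N)%N -> p.[g i] = 0) -> p = 0.
Proof.
move=> ginj hs hz; apply/eqP; apply/negPn/negP => p0.
have := max_poly_roots p0 (rs := map g (iota 0 N)).
rewrite size_map size_iota => h.
have : (N < size p)%N.
  apply: h; last by rewrite map_inj_uniq ?iota_uniq.
  apply/allP => x /mapP [i]; rewrite mem_iota add0n => /andP [_ hi] ->.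
  by rewrite /root hz.
by rewrite ltnNge hs.
Qed.

Lemma Rp_conj (C : numClosedFieldType) n (a : nat -> C) t :
  ((Rp n a).[t])^* = (Rp n (fun k => (a (n - k)%N)^*)).[-(t^*) - 1].
Proof.
rewrite !Rp_horner rmorph_sum (reindex_inj rev_ord_inj) /=; apply: eq_bigr => k _.
rewrite subSS !rmorphM rmorphXn rmorphN /= conjCi opprK rmorph_prod /=.
rewrite [in RHS](reindex_inj rev_ord_inj) /=.
have kn : (k <= n)%N by rewrite -ltnS.
rewrite [in RHS](eq_bigr (fun j : 'I_n => - (t^* + (n%:R - (n - k)%:R - j%:R)))); last first.
  move=> j _; have := ltn_ord j => jn; rewrite !natrB //; ring.
rewrite prodrN card_ord.
under eq_bigr do rewrite rmorphD rmorphB rmorphB !rmorph_nat.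
rewrite mulrA -[(_ * (-'i)^+n) * _]mulrA -exprMn mulrN1 opprK.
by rewrite mulrC.
Qed.

Lemma triang (C : numClosedFieldType) n (c : nat -> C) :
  (forall m, (m <= n)%N -> \sum_(k < n.+1) c k * ((m + n - k)^_n)%:R = 0) ->
  forall m, (m <= n)%N -> c m = 0.
Proof.
move=> h m; elim/ltn_ind: m => m IH mn.
have := h m mn; have mn' : (m < n.+1)%N by [].
rewrite (bigD1 (Ordinal mn')) //= big1; last first.
  move=> k /eqP kne.
  have [km|km|km] := ltngtP k m.
  - by rewrite IH ?mul0r //; lia.
  - by have kn := ltn_ord k; rewrite ffact_small ?mulr0 //; lia.
  - by exfalso; apply: kne; apply: val_inj.
have -> : (m + n - m = n)%N by lia.
rewrite ffactnn addr0 => /eqP; rewrite mulf_eq0 pnatr_eq0 eqn0Ngt fact_gt0 orbF.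
by move/eqP.
Qed.

Lemma xL_conj (C : numClosedFieldType) (t : C) : (xL t)^* = xL (-(t^*) - 1).
Proof.
rewrite /xL rmorphM rmorphN /= conjCi rmorphD fmorphV /= rmorph_nat.
by field.
Qed.

Lemma xL_inj (C : numClosedFieldType) : injective (fun i : nat => xL (i%:R : C)).
Proof.
move=> i j /= /mulfI h; apply/eqP; rewrite -(eqr_nat C).
have : - 'i != 0 :> C by rewrite oppr_eq0 neq0Ci.
by move/h/addIr => ->.
Qed.

Theorem theorem4p3 (C : numClosedFieldType) (n : nat) (a : nat -> C)
  (P : {poly C}) (hP : associated_poly n a P) :
  (forall r : nat, P`_r \is Num.real) <->
  (forall k : nat, (k <= n)%N -> a k = (a (n - k)%N)^*).
Proof.
set L : {poly C} := -'i *: ('X + (2^-1)%:P).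
have hL : forall t, L.[t] = xL t by move=> t; rewrite /L hornerZ hornerD hornerX hornerC.
have hsP := hP.1.
have hA : P \Po L = Rp n a.
  apply/eqP; rewrite -subr_eq0; apply/eqP.
  apply: (@poly_eq0_inj C _ (fun i => i%:R) n.+1).
  - by move=> i j /eqP; rewrite eqr_nat => /eqP.
  - apply: leq_trans (size_polyD _ _) _; rewrite size_polyN geq_max size_Rp andbT.
    apply: leq_trans (size_comp_poly_leq _ _) _; rewrite ltnS.
    have hL1 : ((size L).-1 <= 1)%N.
      have := size_scale_leq (-'i : C) ('X + (2^-1)%:P); rewrite size_XaddC -/L; lia.
    apply: leq_trans (leq_mul (leqnn _) hL1) _; rewrite muln1; lia.
  - move=> i _; rewrite hornerD hornerN horner_comp hL (@assoc_val _ _ _ _ hP) Rp_nat.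
    by rewrite subrr.
have hPL : forall t, P.[xL t] = (Rp n a).[t] by move=> t; rewrite -hA horner_comp hL.
set b := fun k => (a (n - k)%N)^*.
set Pc := map_poly (Num.conj) P.
have key2 : forall s, Pc.[xL s] = (Rp n b).[s].
  move=> s.
  have e : xL s = (xL (-(s^*) - 1))^*.
    rewrite xL_conj rmorphB rmorphN /= conjCK rmorph1. congr xL. ring.
  rewrite e horner_map /= hPL Rp_conj; congr (_.[_]).
  by rewrite rmorphB rmorphN /= conjCK rmorph1; ring.
split.
- move=> hreal.
  have hPc : Pc = P.
    apply/polyP => r; rewrite coef_map /=; apply/eqP; rewrite -CrealE; exact: hreal.
  have htr := @triang C n (fun k => (a k - b k) * (-'i)^+n).
  move=> k kn.
  have hk : (a k - b k) * (-'i)^+n = 0.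
    apply: (htr _ k kn) => m mn.
    have e : (Rp n a).[m%:R] = (Rp n b).[m%:R] by rewrite -hPL -key2 hPc.
    move/eqP: e; rewrite !Rp_nat -subr_eq0 -sumrB => /eqP e'; rewrite -[in RHS]e'.
    by apply: eq_bigr => j _; rewrite /b; ring.
  move/eqP: hk; rewrite mulf_eq0 expf_eq0 oppr_eq0 (negbTE (neq0Ci C)) andbF orbF subr_eq0.
  by move/eqP.
- move=> hsym.
  have hRb : Rp n b = Rp n a.
    rewrite /Rp; apply: eq_bigr => k _; rewrite /b -hsym // -ltnS //.
  have hPc : Pc = P.
    apply/eqP; rewrite -subr_eq0; apply/eqP.
    apply: (@poly_eq0_inj C _ _ n.+1 (@xL_inj C)).
    - apply: leq_trans (size_polyD _ _) _.
      by rewrite size_polyN geq_max size_map_poly hsP.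
    - by move=> i _; rewrite hornerD hornerN key2 hPL hRb subrr.
  move=> r; rewrite CrealE; apply/eqP.
  by rewrite -[in RHS]hPc coef_map.
Qed.
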